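(* For every budget $B\ge 1$, every pool size bound $G$ and every population instance, $$\max_{T\in\mathcal T^B}u(T)\;\le\;4\,\max_{T\in\tilde{\mathcal T}^B}u(T).$$ That is, $\mathrm{gain}(B)\le 4$ for all $B\ge1$.
   Context: Population $[n]=\{1,\dots,n\}$. Individual $i$ is healthy with probability $q_i\in[0,1]$, independently across individuals, and has utility $u_i\ge 0$. For $S\subseteq[n]$, $q_S=\prod_{i\in S}q_i$ ($q_\emptyset=1$). A test is a set $t\subseteq[n]$ with $|t|\le G$; it is negative iff all its members are healthy. A testing regime with budget $B$ is a tuple $T=(t_1,\dots,t_B)$ of tests; $\mathcal T^B$ is the set of all such regimes, and $\tilde{\mathcal T}^B$ the set of non-overlapping ones (tests pairwise disjoint). $P^T_i$ is the probability that $i$ belongs to at least one negative test of $T$; welfare is $u(T)=\sum_{i}u_iP^T_i$. $\mathrm{gain}(B)$ is the supremum over instances of $\max_{T\in\mathcal T^B}u(T)/\max_{T\in\tilde{\mathcal T}^B}u(T)$. *)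

(* Defs.v *)
From HB Require Import structures.
From mathcomp Require Import all_boot all_order all_algebra.
Set Implicit Arguments. Unset Strict Implicit. Unset Printing Implicit Defensive.
Import Order.TTheory GRing.Theory Num.Theory.
Local Open Scope ring_scope.

(* Population 'I_n; a health outcome is the set H of healthy individuals.
   Individual i is healthy with probability q i, independently, so
   Pr[H] = prod_{i in H} q i * prod_{i notin H} (1 - q i). *)
Definition outcome_prob (R : realFieldType) (n : nat) (q : 'I_n -> R)
    (H : {set 'I_n}) : R :=
  (\prod_(i in H) q i) * \prod_(i in ~: H) (1 - q i).

Definition regime (n B : nat) := {ffun 'I_B -> {set 'I_n}}.

Definition valid_regime (n B G : nat) (T : regime n B) : bool :=
  [forall k, #|T k| <= G]%N.

Definition nonoverlapping (n B : nat) (T : regime n B) : bool :=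
  [forall k, forall l, (k != l) ==> [disjoint T k & T l]].

(* A test t is negative in outcome H iff all members are healthy (t \subset H).
   P^T_i = Pr[i belongs to at least one negative test of T]. *)
Definition prob_in_negative (R : realFieldType) (n B : nat) (q : 'I_n -> R)
    (T : regime n B) (i : 'I_n) : R :=
  \sum_(H : {set 'I_n} | [exists k, (i \in T k) && (T k \subset H)])
     outcome_prob q H.

Definition welfare (R : realFieldType) (n B : nat) (q u : 'I_n -> R)
    (T : regime n B) : R :=
  \sum_(i < n) u i * prob_in_negative q T i.

(* max over all regimes of size-<=G tests (welfare is >= 0, and the set is
   nonempty, so the 0 default is harmless) *)
Definition opt_welfare (R : realFieldType) (n B G : nat) (q u : 'I_n -> R) : R :=
  \big[Num.max/0]_(T : regime n B | valid_regime G T) welfare q u T.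

Definition opt_welfare_nonoverlap (R : realFieldType) (n B G : nat)
    (q u : 'I_n -> R) : R :=
  \big[Num.max/0]_(T : regime n B | valid_regime G T && nonoverlapping T)
     welfare q u T.

(* Main.v *)
Require Import Defs.
From HB Require Import structures.
From mathcomp Require Import all_boot all_order all_algebra.
From mathcomp Require Import ring lra.
Import Order.TTheory GRing.Theory Num.Theory.
Local Open Scope ring_scope.

Lemma big_opt (R : realFieldType) (B : nat) (F : option 'I_B -> R) :
  \sum_(o : option 'I_B) F o = F None + \sum_(k < B) F (Some k).
Proof.
rewrite (bigD1 None) //=; congr (_ + _).
rewrite (reindex_omap Some (fun o => o)) //=; last by case.
by apply: eq_bigl => k; rewrite eqxx.
Qed.

Section P.
Variables (R : realFieldType) (n : nat) (q : 'I_n -> R).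
Hypothesis hq : forall i, 0 <= q i <= 1.

Lemma op_ge0 H : 0 <= outcome_prob q H.
Proof.
rewrite /outcome_prob mulr_ge0 //; apply: prodr_ge0 => i _.
  by case/andP: (hq i).
by case/andP: (hq i) => _ h; rewrite subr_ge0.
Qed.

Lemma op_prod H : outcome_prob q H = \prod_j (if j \in H then q j else 1 - q j).
Proof.
rewrite /outcome_prob (bigID (mem H) predT) /=.
congr (_ * _); apply: eq_big => j; rewrite ?inE //.
- by move=> ->.
- by move=> /negbTE ->.
Qed.

Lemma sum_sets (h : 'I_n -> bool -> R) :
  \sum_(H : {set 'I_n}) \prod_j h j (j \in H) = \prod_j (h j true + h j false).
Proof.
under eq_bigr do rewrite -big_bool.
rewrite bigA_distr_bigA /=.
rewrite (reindex (fun H : {set 'I_n} => [ffun j => j \in H])) /=.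
  by apply: eq_bigr => H _; apply: eq_bigr => j _; rewrite ffunE.
exists (fun f : {ffun 'I_n -> bool} => [set j | f j]) => x _.
  by apply/setP => j; rewrite inE ffunE.
by apply/ffunP => j; rewrite ffunE inE.
Qed.

Lemma prob_sr (s r : {set 'I_n}) : [disjoint s & r] ->
  \sum_(H : {set 'I_n} | (s \subset H) && [disjoint r & H]) outcome_prob q H
  = \prod_(j in s) q j * \prod_(j in r) (1 - q j).
Proof.
move=> dsr.
pose h j b := if b then (if j \in r then 0 else q j) else (if j \in s then 0 else 1 - q j).
transitivity (\sum_(H : {set 'I_n}) \prod_j h j (j \in H)).
  rewrite big_mkcond /=; apply: eq_bigr => H _.
  case: ifP => [/andP[sH rH]|].
    rewrite op_prod; apply: eq_bigr => j _; rewrite /h.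
    case: ifP => jH.
      by rewrite (disjointFl rH jH).
    by case: ifP => // js; move/subsetP: sH => /(_ j js); rewrite jH.
  move/negbT; rewrite negb_and => /orP[/subsetPn[j js jH]|].
    by rewrite (bigD1 j) //= /h (negbTE jH) js mul0r.
  case/pred0Pn => j /andP[jr jH].
  have jr' : j \in r := jr; have jH' : j \in H := jH.
  by rewrite (bigD1 j) //= /h jH' jr' mul0r.
rewrite sum_sets.
rewrite (bigID (mem s) predT) /= (bigID (mem r) (fun j => j \notin s)) /=.
rewrite [X in _ * (_ * X)]big1; last first.
  by move=> j /andP[js jr]; rewrite /h (negbTE js) (negbTE jr) addrC subrK.
rewrite mulr1; congr (_ * _); apply: eq_big => j; rewrite /h.
- by [].
- by move=> js; rewrite (disjointFr dsr js) js addr0.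
- by rewrite andb_idl // => jr; rewrite (disjointFl dsr jr).
- by move=> /andP[js jr]; rewrite jr (negbTE js) add0r.
Qed.

Lemma disj0l (A : {set 'I_n}) : [disjoint set0 & A].
Proof. by apply/pred0P => x; rewrite /= inE. Qed.
Lemma disj0r (A : {set 'I_n}) : [disjoint A & set0].
Proof. by rewrite disjoint_sym disj0l. Qed.

Lemma prob_sub (s : {set 'I_n}) :
  \sum_(H : {set 'I_n} | s \subset H) outcome_prob q H = \prod_(j in s) q j.
Proof.
have := @prob_sr s set0 (disj0r s).
rewrite big_set0 mulr1 => <-.
by apply: eq_bigl => H; rewrite disj0l andbT.
Qed.

Lemma prob_tot : \sum_(H : {set 'I_n}) outcome_prob q H = 1.
Proof.
have := prob_sub set0; rewrite big_set0 => <-.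
by apply: eq_bigl => H; rewrite sub0set.
Qed.

Lemma sum_le_pred (P1 P2 : pred {set 'I_n}) :
  (forall H, P1 H -> P2 H) ->
  \sum_(H | P1 H) outcome_prob q H <= \sum_(H | P2 H) outcome_prob q H.
Proof.
move=> h12; rewrite [X in _ <= X]big_mkcond [X in X <= _]big_mkcond /=.
apply: ler_sum => H _; case: ifP => p1; first by rewrite h12.
by case: ifP => _ //; apply: op_ge0.
Qed.

Lemma one_sick (t : {set 'I_n}) :
  \sum_(j in t) (\prod_(l in t :\ j) q l * (1 - q j)) <= 1.
Proof.
have -> : \sum_(j in t) (\prod_(l in t :\ j) q l * (1 - q j)) = (\sum_(j in t) \sum_(H : {set 'I_n} | (t :\ j \subset H) && [disjoint [set j] & H]) outcome_prob q H).
  apply: eq_bigr => j jt; rewrite prob_sr ?big_set1 //.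
  by rewrite disjoint_sym disjoints1 !inE eqxx.
under eq_bigr do rewrite big_mkcond.
rewrite exchange_big /= -prob_tot; apply: ler_sum => H _.
case: (pickP [pred j | (j \in t) && ((t :\ j \subset H) && [disjoint [set j] & H])]) => [j0 /andP[j0t /andP[s0 d0]]|none].
  rewrite (bigD1 j0) //= s0 d0 big1 ?addr0 // => j /andP[jt ne].
  case: ifP => // /andP[sj dj]; exfalso; move: d0; rewrite disjoints1 => /negP; apply.
  by move/subsetP: sj; apply; rewrite !inE eq_sym ne.
rewrite big1; first exact: op_ge0.
by move=> j jt; have := none j; rewrite /= jt /= => ->.
Qed.

Lemma pin_ge0 B (T : regime n B) i : 0 <= prob_in_negative q T i.
Proof. by apply: sumr_ge0 => H _; apply: op_ge0. Qed.

Lemma pin_le_q B (T : regime n B) i : prob_in_negative q T i <= q i.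
Proof.
have := prob_sub [set i]; rewrite big_set1 => <-; apply: sum_le_pred => H /existsP[k /andP[ik kH]].
by rewrite sub1set; move/subsetP: kH; apply.
Qed.

Lemma pin_ge B (T : regime n B) i k : i \in T k ->
  \prod_(j in T k) q j <= prob_in_negative q T i.
Proof.
move=> ik; rewrite -prob_sub; apply: sum_le_pred => H kH.
by apply/existsP; exists k; rewrite ik.
Qed.

Lemma pin_union B (T : regime n B) i :
  prob_in_negative q T i <= \sum_(k | i \in T k) \prod_(j in T k) q j.
Proof.
under [X in _ <= X]eq_bigr do rewrite -prob_sub big_mkcond.
rewrite exchange_big /= /prob_in_negative big_mkcond /=; apply: ler_sum => H _.
case: ifP => [/existsP[k0 /andP[ik0 k0H]]|_].
  rewrite (bigD1 k0) //= k0H lerDl; apply: sumr_ge0 => k _.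
  by case: ifP => // _; apply: op_ge0.
by apply: sumr_ge0 => k _; case: ifP => // _; apply: op_ge0.
Qed.

Section Cons.
Variables (B G : nat) (T : regime n B).

Definition Qf (i : 'I_n) (k : 'I_B) : R := \prod_(j in T k :\ i) q j.
Definition Lam (i : 'I_n) : R := \sum_(k | i \in T k) Qf i k.
Definition mm (i : 'I_n) : R := Num.max 1 (Lam i).
Definition ws (i : 'I_n) (k : 'I_B) : R := if i \in T k then Qf i k / (2 * mm i) else 0.
Definition w (i : 'I_n) (o : option 'I_B) : R :=
  match o with Some k => ws i k | None => 1 - \sum_k ws i k end.

Lemma Qf_ge0 i k : 0 <= Qf i k.
Proof. by apply: prodr_ge0 => j _; case/andP: (hq j). Qed.
Lemma Lam_ge0 i : 0 <= Lam i.
Proof. by apply: sumr_ge0 => k _; apply: Qf_ge0. Qed.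
Lemma mm_ge1 i : 1 <= mm i.
Proof. by rewrite /mm le_max lexx. Qed.
Lemma mm_gt0 i : 0 < mm i.
Proof. exact: lt_le_trans ltr01 (mm_ge1 i). Qed.
Lemma Lam_le_mm i : Lam i <= mm i.
Proof. by rewrite /mm le_max lexx orbT. Qed.
Lemma ws_ge0 i k : 0 <= ws i k.
Proof.
rewrite /ws; case: ifP => // _; apply: divr_ge0; first exact: Qf_ge0.
by rewrite mulr_ge0 // ltW // mm_gt0.
Qed.
Lemma sum_ws i : \sum_k ws i k = Lam i / (2 * mm i).
Proof. by rewrite /Lam mulr_suml [in RHS]big_mkcond /=; apply: eq_bigr => k _; rewrite /ws; case: ifP; rewrite ?mul0r. Qed.
Lemma sum_ws_le i : \sum_k ws i k <= 1/2.
Proof.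
rewrite sum_ws; have h1 := mm_gt0 i; have h2 := Lam_le_mm i.
rewrite ler_pdivrMr ?mulr_gt0 //.
by rewrite mul1r mulrA mulVf ?mul1r // pnatr_eq0.
Qed.
Lemma w_ge0 i o : 0 <= w i o.
Proof.
case: o => [k|]; first exact: ws_ge0.
rewrite /= subr_ge0; apply: le_trans (sum_ws_le i) _.
by rewrite ler_pdivrMr // mul1r ler1n.
Qed.
Lemma sum_w i : \sum_o w i o = 1.
Proof. by rewrite big_opt /= subrK. Qed.

Definition gk k (j : 'I_n) (o : option 'I_B) : R :=
  if (j \in T k) && (o == Some k) then q j else 1.

Lemma expect i k : i \in T k ->
  \sum_(c : {ffun 'I_n -> option 'I_B})
     (\prod_j w j (c j)) * ((c i == Some k)%:R * \prod_j gk k j (c j))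
  = ws i k * q i * \prod_(j | j != i) (1 - ws j k * (1 - q j)).
Proof.
move=> ik.
pose h j o := w j o * gk k j o * (if j == i then (o == Some k)%:R else 1 : R).
have E (c : {ffun 'I_n -> option 'I_B}) : (\prod_j w j (c j)) * ((c i == Some k)%:R * \prod_j gk k j (c j))
           = \prod_j h j (c j).
  rewrite /h !big_split /= -[X in _ = _ * X]big_mkcond big_pred1_eq.
  by ring.
rewrite (eq_bigr _ (fun c _ => E c)) -bigA_distr_bigA (bigD1 i) //=.
congr (_ * _).
  rewrite big_opt /h /gk /= eqxx mulr0 add0r (bigD1 k) //= eqxx ik /= mulr1.
  rewrite big1 ?addr0 // => k' nk.
  by rewrite (inj_eq Some_inj) (negbTE nk) mulr0.
apply: eq_bigr => j ji.
rewrite big_opt /h /gk /= (negbTE ji) !mulr1 andbF mulr1.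
rewrite [\sum_(k0 < B) ws j k0](bigD1 k) //= [X in _ + X](bigD1 k) //= eqxx andbT mulr1.
under [X in _ + (_ + X)]eq_bigr => k' nk do rewrite (inj_eq Some_inj) (negbTE nk) andbF !mulr1.
set S := \sum_(i0 < B | i0 != k) ws j i0.
rewrite /ws; case: ifP => jk; ring.
Qed.

Lemma sum_wsq k : \sum_j ws j k * (1 - q j) <= 1/2.
Proof.
rewrite (bigID (mem (T k)) predT) /= [X in _ + X]big1 ?addr0; last first.
  by move=> j /negbTE jk; rewrite /ws jk mul0r.
apply: (@le_trans _ _ (\sum_(j in T k) (\prod_(l in T k :\ j) q l * (1 - q j)) / 2)).
  apply: ler_sum => j jk; rewrite /ws jk /Qf.
  set a := \prod_(l in T k :\ j) q l.
  have a0 : 0 <= a by apply: prodr_ge0 => l _; case/andP: (hq l).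
  have b0 : 0 <= 1 - q j by case/andP: (hq j) => _ h; rewrite subr_ge0.
  have m1 := mm_ge1 j; have m0 := mm_gt0 j.
  have -> : a / (2 * mm j) * (1 - q j) = (a * (1 - q j) / 2) / mm j.
    by field; rewrite (gt_eqF m0).
  rewrite ler_pdivrMr //; apply: ler_peMr => //.
  by apply: divr_ge0; [apply: mulr_ge0 | ].
rewrite -mulr_suml; have := one_sick (T k); set X := \sum_(j in T k) _ => hX.
by rewrite ler_pdivrMr // mul1r mulrC; lra.
Qed.

Lemma ws_le i k : ws i k <= 1/2.
Proof.
apply: le_trans (sum_ws_le i); rewrite (bigD1 k) //= lerDl.
by apply: sumr_ge0 => k' _; apply: ws_ge0.
Qed.

Lemma prod_ge (P : pred 'I_n) (y : 'I_n -> R) : (forall j, 0 <= y j <= 1) ->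
  1 - \sum_(j | P j) y j <= \prod_(j | P j) (1 - y j).
Proof.
move=> hy.
suff : 0 <= \sum_(j | P j) y j /\ 1 - \sum_(j | P j) y j <= \prod_(j | P j) (1 - y j)
         /\ 0 <= \prod_(j | P j) (1 - y j) by case=> _ [].
elim/big_rec2: _ => [|j S Pr Pj [hS [h1 h2]]]; first by rewrite subr0 lexx ler01.
case/andP: (hy j) => y0 y1.
split; first by rewrite addr_ge0.
split; last by rewrite mulr_ge0 // subr_ge0.
have : (1 - y j) * (1 - S) <= (1 - y j) * Pr by rewrite ler_wpM2l // subr_ge0.
by nra.
Qed.

Lemma prod_half i k :
  1/2 <= \prod_(j | j != i) (1 - ws j k * (1 - q j)).
Proof.
have hy : forall j, 0 <= ws j k * (1 - q j) <= 1.
  move=> j; have h1 := ws_ge0 j k; have h2 := ws_le j k; case/andP: (hq j) => h3 h4.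
  by apply/andP; split; nra.
apply: le_trans (prod_ge (fun j => j != i) _ hy).
have h := sum_wsq k.
have : \sum_(j | j != i) ws j k * (1 - q j) <= \sum_j ws j k * (1 - q j).
  rewrite [X in _ <= X](bigD1 i) //= lerDr.
  apply: mulr_ge0; first exact: ws_ge0.
  by case/andP: (hq i) => _ hh; rewrite subr_ge0.
by lra.
Qed.

Definition sc (c : {ffun 'I_n -> option 'I_B}) : regime n B :=
  [ffun k => [set j in T k | c j == Some k]].

Lemma sc_valid c : valid_regime G T -> valid_regime G (sc c).
Proof.
move=> /forallP hT; apply/forallP => k; apply: leq_trans (hT k).
by apply: subset_leq_card; apply/subsetP => j; rewrite ffunE inE => /andP[].
Qed.

Lemma sc_nonov c : nonoverlapping (sc c).
Proof.
apply/forallP => k; apply/forallP => l; apply/implyP => kl.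
rewrite -setI_eq0; apply/eqP/setP => j; rewrite !ffunE !inE.
apply/negbTE; apply/negP => /andP[/andP[_ /eqP ck] /andP[_ /eqP cl]].
by move: kl; rewrite -(inj_eq Some_inj) -ck -cl eqxx.
Qed.

Variable u : 'I_n -> R.
Hypothesis hu : forall i, 0 <= u i.

Definition Lc (c : {ffun 'I_n -> option 'I_B}) : R :=
  \sum_i u i * \sum_(k | i \in T k) ((c i == Some k)%:R * \prod_j gk k j (c j)).

Lemma Lc_le c : Lc c <= welfare q u (sc c).
Proof.
apply: ler_sum => i _; apply: ler_wpM2l => //.
case E: (c i) => [k0|]; last first.
  rewrite big1; first exact: pin_ge0.
  by move=> k _; rewrite mul0r.
case: (boolP (i \in T k0)) => ik0; last first.
  rewrite big1; first exact: pin_ge0.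
  move=> k ik; rewrite (inj_eq Some_inj).
  by case: eqP => [ek|_]; [rewrite ek ik in ik0 | rewrite mul0r].
rewrite (bigD1 k0) //= [X in _ + X]big1 ?addr0; last first.
  by move=> k /andP[_ nk]; rewrite (inj_eq Some_inj) eq_sym (negbTE nk) mul0r.
rewrite eqxx mul1r.
have -> : \prod_j gk k0 j (c j) = \prod_(j in sc c k0) q j.
  rewrite [RHS]big_mkcond; apply: eq_bigr => j _; rewrite ffunE inE /gk.
  by case: ifP.
by apply: pin_ge; rewrite ffunE inE ik0 E eqxx.
Qed.

Definition Wt (c : {ffun 'I_n -> option 'I_B}) : R := \prod_j w j (c j).

Lemma Wt_ge0 c : 0 <= Wt c.
Proof. by apply: prodr_ge0 => j _; apply: w_ge0. Qed.

Lemma sum_Wt : \sum_c Wt c = 1.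
Proof. by rewrite /Wt -(bigA_distr_bigA w) big1 // => j _; apply: sum_w. Qed.

Lemma ELc : \sum_c Wt c * Lc c =
  \sum_i u i * \sum_(k | i \in T k) (ws i k * q i * \prod_(j | j != i) (1 - ws j k * (1 - q j))).
Proof.
rewrite /Lc; under eq_bigr do rewrite mulr_sumr.
rewrite exchange_big /=; apply: eq_bigr => i _.
under eq_bigr do rewrite mulrCA mulr_sumr.
rewrite -mulr_sumr exchange_big /=; congr (_ * _).
by apply: eq_bigr => k ik; rewrite -expect.
Qed.

Lemma per_i i : q i * Lam i / mm i / 4 <=
  \sum_(k | i \in T k) (ws i k * q i * \prod_(j | j != i) (1 - ws j k * (1 - q j))).
Proof.
have q0 : 0 <= q i by case/andP: (hq i).
apply: (@le_trans _ _ (\sum_(k | i \in T k) (ws i k * q i * (1/2)))); last first.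
  apply: ler_sum => k _; apply: ler_wpM2l; first by rewrite mulr_ge0 // ws_ge0.
  exact: prod_half.
rewrite -!mulr_suml.
have -> : \sum_(k | i \in T k) ws i k = \sum_k ws i k.
  by rewrite [RHS](bigID (fun k => i \in T k)) /= [X in _ = _ + X]big1 ?addr0 // => k /negbTE ik; rewrite /ws ik.
rewrite sum_ws; have m0 := mm_gt0 i.
rewrite le_eqVlt; apply/orP; left; apply/eqP; field.
by rewrite (gt_eqF m0).
Qed.

Lemma pin_bound i : prob_in_negative q T i <= q i * Lam i / mm i.
Proof.
have h1 := pin_le_q B T i; have h2 := pin_union B T i.
have e : \sum_(k | i \in T k) \prod_(j in T k) q j = q i * Lam i.
  by rewrite /Lam mulr_sumr; apply: eq_bigr => k ik; rewrite (big_setD1 _ ik).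
rewrite e in h2; rewrite /mm; case: (leP (Lam i) 1) => hl.
  by rewrite divr1.
rewrite mulfK //; apply/negP => /eqP L0.
by rewrite L0 in hl; move: hl; rewrite ltr10.
Qed.


Lemma main_T : valid_regime G T ->
  welfare q u T <= 4 * opt_welfare_nonoverlap B G q u.
Proof.
move=> vT; set W := opt_welfare_nonoverlap B G q u.
have hW c : welfare q u (sc c) <= W.
  by apply: (@le_bigmax_cond _ _ _ 0 (sc c)); rewrite sc_valid ?sc_nonov.
apply: (@le_trans _ _ (\sum_i u i * (q i * Lam i / mm i))).
  by apply: ler_sum => i _; apply: ler_wpM2l => //; apply: pin_bound.
apply: (@le_trans _ _ (4 * \sum_c Wt c * Lc c)); last first.
  apply: ler_wpM2l => //; apply: (@le_trans _ _ (\sum_c Wt c * W)).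
    apply: ler_sum => c _; apply: ler_wpM2l; first exact: Wt_ge0.
    exact: le_trans (Lc_le c) (hW c).
  by rewrite -mulr_suml sum_Wt mul1r.
rewrite ELc mulr_sumr; apply: ler_sum => i _.
rewrite [X in _ <= X]mulrCA; apply: ler_wpM2l => //.
have := per_i i; set a := q i * Lam i / mm i; set b := \sum_(k | _) _.
by move=> h; lra.
Qed.

Lemma W_nonneg : 0 <= opt_welfare_nonoverlap B G q u.
Proof.
pose c0 : {ffun 'I_n -> option 'I_B} := [ffun _ => None].
apply: (@le_trans _ _ (welfare q u (sc c0))).
  by apply: sumr_ge0 => i _; apply: mulr_ge0 => //; apply: pin_ge0.
apply: (@le_bigmax_cond _ _ _ 0 (sc c0)); rewrite sc_nonov andbT.
apply/forallP => k; have -> : sc c0 k = set0.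
  by apply/setP => j; rewrite !ffunE !inE /c0 ffunE andbF.
by rewrite cards0.
Qed.
End Cons.
End P.

Theorem theorem1 (R : realFieldType) (n B G : nat) (q u : 'I_n -> R)
  (hB : (1 <= B)%N)
  (hq : forall i, 0 <= q i <= 1)
  (hu : forall i, 0 <= u i) :
  opt_welfare B G q u <= 4 * opt_welfare_nonoverlap B G q u.
Proof.
apply: bigmax_le => [|T vT].
  by rewrite mulr_ge0 // (@W_nonneg _ _ _ hq B G [ffun _ => set0] _ hu).
exact: (@main_T _ _ _ hq B G T _ hu vT).
Qed.
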